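(* Fix integers $n\ge 2$, $m\ge 1$ and prompts $x_1,\dots,x_n$ (deterministic). For each $i$, let $y_i^1,\dots,y_i^m$ be i.i.d. responses drawn from a distribution $\pi(\cdot\mid x_i)$, independently across $i$, and let $r_i^j=r(x_i,y_i^j)$ be real rewards with finite variance. Let $\mu_i=\mathbb{E}[r(x_i,y)]$ and $\sigma_i^2=\mathrm{Var}[r(x_i,y)]$ for $y\sim\pi(\cdot\mid x_i)$. Define $\hat\mu_i=\frac1m\sum_{j=1}^m r_i^j$, $\hat{\bar\mu}=\frac1{nm}\sum_{i=1}^n\sum_{j=1}^m r_i^j$, and for $\lambda\in[0,1]$ the baseline $b_i^j(\lambda)=(1-\lambda)\hat\mu_i+\lambda\hat{\bar\mu}$. Let $$v=\frac1{nm}\sum_{i=1}^n\sigma_i^2,\qquad \bar\mu=\frac1n\sum_{i=1}^n\mu_i,\qquad s=\frac1{n-1}\sum_{i=1}^n(\mu_i-\bar\mu)^2,$$ and assume $s+v>0$. Then the function $$\lambda\mapsto \frac1{mn}\sum_{i=1}^n\sum_{j=1}^m\mathbb{E}\big[(b_i^j(\lambda)-\mu_i)^2\big]$$ (expectation over the responses) is minimized over $\lambda\in[0,1]$ at $\lambda^\star=\dfrac{v}{s+v}$. *)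

(* Defs.v *)
From HB Require Import structures.
From mathcomp Require Import all_boot all_order all_algebra.
From mathcomp Require Import all_classical all_reals all_analysis.
Set Implicit Arguments. Unset Strict Implicit. Unset Printing Implicit Defensive.
Import Order.TTheory GRing.Theory Num.Theory.
Local Open Scope classical_set_scope.
Local Open Scope ring_scope.

Definition mutually_independent {d} {T : measurableType d} {R : realType}
  (P : probability T R) (I : finType) (X : I -> {RV P >-> R}) : Prop :=
  forall (J : {set I}) (B : I -> set R), (forall k, measurable (B k)) ->
    P (\bigcap_(k in [set k | k \in J]) (X k @^-1` B k)) =
    (\prod_(k in J) P (X k @^-1` B k))%E.

Definition muhat {d} {T : measurableType d} {R : realType} (n m : nat)
  (r : 'I_n -> 'I_m -> T -> R) (i : 'I_n) : T -> R :=
  fun w => m%:R^-1 * \sum_(j < m) r i j w.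

Definition mubarhat {d} {T : measurableType d} {R : realType} (n m : nat)
  (r : 'I_n -> 'I_m -> T -> R) : T -> R :=
  fun w => (n * m)%:R^-1 * \sum_(i < n) \sum_(j < m) r i j w.

Definition baseline {d} {T : measurableType d} {R : realType} (n m : nat)
  (r : 'I_n -> 'I_m -> T -> R) (lam : R) (i : 'I_n) (j : 'I_m) : T -> R :=
  fun w => (1 - lam) * muhat r i w + lam * mubarhat r w.

Definition baseline_mse {d} {T : measurableType d} {R : realType}
  (P : probability T R) (n m : nat) (r : 'I_n -> 'I_m -> T -> R)
  (mu : 'I_n -> R) (lam : R) : \bar R :=
  (((m * n)%:R^-1)%:E *
   \sum_(i < n) \sum_(j < m)
      'E_P[fun w => ((baseline r lam i j w - mu i) ^+ 2)%R])%E.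

Definition vbar {R : realType} (n m : nat) (sig2 : 'I_n -> R) : R :=
  (n * m)%:R^-1 * \sum_(i < n) sig2 i.

Definition mubar {R : realType} (n : nat) (mu : 'I_n -> R) : R :=
  n%:R^-1 * \sum_(i < n) mu i.

Definition sbar {R : realType} (n : nat) (mu : 'I_n -> R) : R :=
  (n - 1)%:R^-1 * \sum_(i < n) (mu i - mubar mu) ^+ 2.

(* Main.v *)
Require Import Defs.
From HB Require Import structures.
From mathcomp Require Import all_boot all_order all_algebra.
From mathcomp Require Import all_classical all_reals all_analysis.
From mathcomp Require Import measurable_realfun.
From mathcomp Require Import ring lra.
Import Order.TTheory GRing.Theory Num.Theory.
Local Open Scope classical_set_scope.
Local Open Scope ring_scope.

Set Implicit Arguments. Unset Strict Implicit. Unset Printing Implicit Defensive.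


Section indep.
Context {R : realType} {d} {T : measurableType d} (P : probability T R).
Local Open Scope ereal_scope.

Lemma indep_mulE (X Y : {RV P >-> R}) :
  (forall A B, measurable A -> measurable B ->
     P (X @^-1` A `&` Y @^-1` B) = P (X @^-1` A) * P (Y @^-1` B)) ->
  (X : T -> R) \in Lfun P 1 -> (Y : T -> R) \in Lfun P 1 ->
  ((X : T -> R) \* Y)%R \in Lfun P 1 ->
  'E_P[(X : T -> R) \* Y] = 'E_P[X] * 'E_P[Y].
Proof.
move=> H X1 Y1 XY1.
have mphi : measurable_fun setT (fun w => (X w, Y w)).
  by apply: measurable_fun_pair.
pose phi : {mfun T >-> (R * R)%type} :=
  HB.pack (fun w => (X w, Y w)) (isMeasurableFun.Build _ _ _ _ _ mphi).
pose PX := distribution P X.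
pose PY := distribution P Y.
have H' : forall A B, measurable A -> measurable B ->
    distribution P phi (A `*` B) = PX A * PY B.
  move=> A B mA mB; rewrite /PX /PY /distribution /pushforward -H//.
have Heq := product_measure_unique H'.
pose f := fun z : (R * R)%type => (z.1 * z.2)%:E.
have mf : measurable_fun setT f.
  apply/measurable_EFinP; apply: measurable_funM.
    exact: measurable_fst.
  exact: measurable_snd.
have iXY := (Lfun1_integrable _ _).1 XY1.
have iphi : P.-integrable setT (f \o phi) by [].
have E1 : 'E_P[(X : T -> R) \* Y] = \int[distribution P phi]_z f z.
  by rewrite unlock integral_distribution.
have ipush : (distribution P phi).-integrable setT f.
  apply: (integrable_pushforward mphi mf) => //.
have iprod : (PX \x PY).-integrable setT f.
  apply/integrableP; split => //.
  rewrite (eq_measure_integral (distribution P phi)); last first.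
    by move=> A mA _; apply: Heq.
  by move/integrableP : ipush => [].
have E2 : \int[distribution P phi]_z f z = \int[PX \x PY]_z f z.
  by apply: eq_measure_integral => A mA _; rewrite -Heq.
rewrite E1 E2 -(integral12_prod_meas1 iprod).
have mE : measurable_fun [set: R] (EFin : R -> \bar R).
  by apply/measurable_EFinP.
have iZ : forall Z : {RV P >-> R}, (Z : T -> R) \in Lfun P 1 ->
    (distribution P Z).-integrable setT EFin.
  move=> Z Z1; apply: (integrable_pushforward (measurable_funPT Z) mE) => //.
  exact/Lfun1_integrable.
have EZ : forall Z : {RV P >-> R}, (Z : T -> R) \in Lfun P 1 ->
    \int[distribution P Z]_y y%:E = 'E_P[Z].
  move=> Z Z1; rewrite expectation_def integral_distribution//.
  exact/Lfun1_integrable.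
transitivity (\int[PX]_x (x%:E * 'E_P[Y])).
  apply: eq_integral => x _; rewrite /fubini_F /f /=.
  under eq_integral do rewrite EFinM.
  by rewrite (integralZl measurableT (iZ Y Y1)) EZ.
rewrite -(fineK (expectation_fin_num Y1)) integralZr//; last exact: iZ.
by rewrite EZ.
Qed.

Lemma pair_indep (I : finType) (X : I -> {RV P >-> R}) :
  (forall (J : {set I}) (B : I -> set R), (forall k, measurable (B k)) ->
    P (\bigcap_(k in [set k | k \in J]) (X k @^-1` B k)) =
    (\prod_(k in J) P (X k @^-1` B k))%E) ->
  forall p q, p != q -> forall A B, measurable A -> measurable B ->
  P (X p @^-1` A `&` X q @^-1` B) = P (X p @^-1` A) * P (X q @^-1` B).
Proof.
move=> H p q pq A B mA mB.
pose Bf := fun k => if k == p then A else if k == q then B else setT.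
have mBf : forall k, measurable (Bf k).
  by move=> k; rewrite /Bf; case: ifP => _ //; case: ifP => _ //.
have := H [set p; q]%SET Bf mBf.
have qp : (q == p) = false by apply/negbTE; rewrite eq_sym.
rewrite big_setU1 /= ?big_set1; last by rewrite !inE.
rewrite /Bf eqxx qp eqxx => <-.
congr (P _); apply/seteqP; split => x /=.
- move=> [Hp Hq] k; rewrite /= in_set2 => /orP[] /eqP ->.
    by rewrite eqxx.
  by rewrite qp eqxx.
- move=> Hx; split.
    by have := Hx p; rewrite /= in_set2 eqxx /= => /(_ isT).
  by have := Hx q; rewrite /= in_set2 qp eqxx orbT => /(_ isT).
Qed.
End indep.


Section realcov.
Context {R : realType} {d} {T : measurableType d} (P : probability T R).
Local Notation L2 := (Lfun P 2%:E).

Definition Er (f : T -> R) : R := fine ('E_P[f])%E.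
Definition Cv (f g : T -> R) : R := fine (covariance P f g).

Lemma L2D f g : f \in L2 -> g \in L2 -> (f \+ g)%R \in L2.
Proof.
have h12 : (1 <= (2%:E : \bar R))%E by rewrite lee1n.
by move=> f2 g2; apply: (proj2 (Lfun_addr_closed P h12)).
Qed.

Lemma L2B f g : f \in L2 -> g \in L2 -> (f \- g)%R \in L2.
Proof.
have h12 : (1 <= (2%:E : \bar R))%E by rewrite lee1n.
move=> f2 g2; apply: L2D => //.
exact: (Lfun_oppr_closed g2).
Qed.

Lemma L2cst c : cst c \in L2.
Proof. exact: (Lfun_cst P c 2). Qed.

Lemma L2Z a f : f \in L2 -> (a \o* f)%R \in L2.
Proof. by move=> f2; apply: Lfun_scale => //; rewrite ler1n. Qed.

Lemma L2_L1 f : f \in L2 -> f \in Lfun P 1.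
Proof. by move=> f2; apply: (Lfun_subset12 _ f2); rewrite fin_num_measure. Qed.

Lemma ErE f : f \in L2 -> ('E_P[f] = (Er f)%:E)%E.
Proof. by move=> f2; rewrite /Er fineK// expectation_fin_num// L2_L1. Qed.

Lemma CvE f g : f \in L2 -> g \in L2 -> covariance P f g = (Cv f g)%:E.
Proof.
move=> f2 g2; rewrite /Cv fineK// covariance_fin_num ?(L2_L1 f2) ?(L2_L1 g2)//.
exact: (Lfun2_mul_Lfun1 f2 g2).
Qed.

Lemma L2_lin (I : Type) (s : seq I) (a : I -> R) (X : I -> T -> R) :
  (forall p, X p \in L2) -> (fun w => \sum_(p <- s) a p * X p w) \in L2.
Proof.
move=> HX; elim: s => [|x s IH].
  have -> : (fun w => \sum_(p <- [::]) a p * X p w) = cst 0.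
    by apply/funext => w; rewrite big_nil.
  exact: Lfun_cst.
have -> : (fun w => \sum_(p <- x :: s) a p * X p w) =
    ((a x \o* X x) \+ (fun w => \sum_(p <- s) a p * X p w))%R.
  by apply/funext => w /=; rewrite big_cons mulrC.
by apply: L2D => //; apply: L2Z.
Qed.

Lemma Er_lin (I : Type) (s : seq I) (a : I -> R) (X : I -> T -> R) :
  (forall p, X p \in L2) ->
  Er (fun w => \sum_(p <- s) a p * X p w) = \sum_(p <- s) a p * Er (X p).
Proof.
move=> HX; suff : ('E_P[(fun w => \sum_(p <- s) a p * X p w)%R] =
    ((\sum_(p <- s) a p * Er (X p))%R)%:E)%E by rewrite /Er => ->.
elim: s => [|x s IH].
  have -> : (fun w => \sum_(p <- [::]) a p * X p w) = cst 0.
    by apply/funext => w; rewrite big_nil.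
  by rewrite expectation_cst big_nil.
have -> : (fun w => \sum_(p <- x :: s) a p * X p w) =
    ((a x \o* X x) \+ (fun w => \sum_(p <- s) a p * X p w))%R.
  by apply/funext => w /=; rewrite big_cons mulrC.
rewrite expectationD; last 2 first.
- exact/L2_L1/L2Z.
- exact/L2_L1/L2_lin.
by rewrite expectationZl ?L2_L1// ErE// IH big_cons EFinD EFinM.
Qed.

Lemma Cv_linl (I : Type) (s : seq I) (a : I -> R) (X : I -> T -> R) g :
  (forall p, X p \in L2) -> g \in L2 ->
  Cv (fun w => \sum_(p <- s) a p * X p w) g = \sum_(p <- s) a p * Cv (X p) g.
Proof.
move=> HX g2; suff : covariance P (fun w => \sum_(p <- s) a p * X p w) g =
    (\sum_(p <- s) a p * Cv (X p) g)%:E by rewrite /Cv => ->.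
elim: s => [|x s IH].
  have -> : (fun w => \sum_(p <- [::]) a p * X p w) = cst 0.
    by apply/funext => w; rewrite big_nil.
  by rewrite covariance_cst_l big_nil.
have -> : (fun w => \sum_(p <- x :: s) a p * X p w) =
    ((a x \o* X x) \+ (fun w => \sum_(p <- s) a p * X p w))%R.
  by apply/funext => w /=; rewrite big_cons mulrC.
rewrite covarianceDl//; last 2 first.
- exact: L2Z.
- exact/L2_lin.
rewrite covarianceZl ?(L2_L1 (HX x)) ?(L2_L1 g2)//; last exact: (Lfun2_mul_Lfun1 (HX x) g2).
by rewrite CvE// IH big_cons EFinD EFinM.
Qed.

Lemma CvC f g : Cv f g = Cv g f.
Proof. by rewrite /Cv covarianceC. Qed.

Lemma Cv_linr (I : Type) (s : seq I) (a : I -> R) (X : I -> T -> R) g :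
  (forall p, X p \in L2) -> g \in L2 ->
  Cv g (fun w => \sum_(p <- s) a p * X p w) = \sum_(p <- s) a p * Cv g (X p).
Proof.
move=> HX g2; rewrite CvC Cv_linl//.
by apply: eq_bigr => p _; rewrite CvC.
Qed.

Lemma sq_dev (b : T -> R) (c : R) : b \in L2 ->
  ('E_P[(fun w => (b w - c) ^+ 2)%R] = (Cv b b + (Er b - c) ^+ 2)%:E)%E.
Proof.
move=> b2.
have g2 : (b \- cst c)%R \in L2 by apply: L2B => //; exact: L2cst.
have efin : ('E_P[(fun w => (b w - c) ^+ 2)%R])%E \is a fin_num.
  apply: expectation_fin_num.
  have -> : (fun w => (b w - c) ^+ 2) = ((b \- cst c) \* (b \- cst c))%R.
    by apply/funext => w; rewrite /= expr2.
  exact: Lfun2_mul_Lfun1.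
have := varianceE g2.
rewrite varianceB_cst_r// /variance CvE//.
rewrite expectationB ?(L2_L1 b2) ?(L2_L1 (L2cst c))//.
rewrite expectation_cst (ErE b2).
have -> : ((b \- cst c) ^+ 2)%R = (fun w => (b w - c) ^+ 2).
  by apply/funext => w; rewrite /= !fctE.
move: efin; move: ('E_P[_])%E => e; case: e => // e _.
rewrite -EFinB; case=> H; congr EFin; rewrite H.
ring.
Qed.

End realcov.


Lemma pair_sumE (R : comRingType) n m (H : 'I_n * 'I_m -> R) :
  \sum_(p : 'I_n * 'I_m) H p = \sum_(k < n) \sum_(l < m) H (k, l).
Proof. by rewrite pair_big; apply: eq_bigr => -[k l]. Qed.

Lemma lincomb (R : comRingType) n m (i : 'I_n) (u t : R) (G : 'I_n * 'I_m -> R) :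
  \sum_(p : 'I_n * 'I_m) (u * (p.1 == i)%:R + t) * G p =
  u * \sum_(l < m) G (i, l) + t * \sum_(k < n) \sum_(l < m) G (k, l).
Proof.
rewrite pair_sumE.
transitivity (\sum_(k < n) (u * (k == i)%:R * \sum_(l < m) G (k, l)) +
   t * \sum_(k < n) \sum_(l < m) G (k, l)).
  rewrite mulr_sumr -big_split; apply: eq_bigr => k _ /=.
  rewrite !mulr_sumr -big_split; apply: eq_bigr => l _ /=; ring.
congr (_ + _); rewrite (bigD1 i) //= eqxx mulr1 [X in _ + X]big1 ?addr0 //.
by move=> k /negbTE ->; rewrite mulr0 mul0r.
Qed.

Unset Implicit Arguments.

Theorem proposition2 (R : realType) (d : measure_display) (T : measurableType d)
  (P : probability T R) (n m : nat) (hn : (2 <= n)%N) (hm : (1 <= m)%N)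
  (r : 'I_n -> 'I_m -> {RV P >-> R})
  (mu sig2 : 'I_n -> R)
  (hindep : mutually_independent (fun k : 'I_n * 'I_m => r k.1 k.2))
  (hident : forall i j j', distribution P (r i j) = distribution P (r i j'))
  (hL2 : forall i j, (r i j : T -> R) \in Lfun P 2%:E)
  (hmu : forall i j, ('E_P[r i j] = (mu i)%:E)%E)
  (hsig : forall i j, ('V_P[r i j] = (sig2 i)%:E)%E)
  (hpos : 0 < sbar mu + vbar m sig2) :
  let lamstar := vbar m sig2 / (sbar mu + vbar m sig2) in
  0 <= lamstar <= 1 /\
  forall lam : R, 0 <= lam <= 1 ->
    (baseline_mse P (fun i j => r i j : T -> R) mu lamstar
     <= baseline_mse P (fun i j => r i j : T -> R) mu lam)%E.
Proof.
move=> lamstar.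
pose X := fun p : 'I_n * 'I_m => (r p.1 p.2 : T -> R).
have X2 : forall p, X p \in Lfun P 2%:E by move=> p; exact: hL2.
have X1 : forall p, X p \in Lfun P 1 by move=> p; exact: L2_L1.
have EX : forall p, Er P (X p) = mu p.1 by move=> p; rewrite /Er /X hmu.
have CX : forall p q, Cv P (X p) (X q) = if p == q then sig2 p.1 else 0.
  move=> p q; case: eqP => [<-|/eqP pq].
    by rewrite /Cv /X; have := hsig p.1 p.2; rewrite /variance => ->.
  have ind := pair_indep hindep pq.
  have H := indep_mulE ind (X1 p) (X1 q) (Lfun2_mul_Lfun1 (X2 p) (X2 q)).
  rewrite /Cv covarianceE ?(X1 p) ?(X1 q) //; last exact: (Lfun2_mul_Lfun1 (X2 p) (X2 q)).
  have f1 := expectation_fin_num (X1 p).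
  have f2 := expectation_fin_num (X1 q).
  by rewrite H subee // fin_numM.
have sig0 : forall i, 0 <= sig2 i.
  by move=> i; have := variance_ge0 P (r i (Ordinal hm)); rewrite hsig lee_fin.
pose u (lam : R) := (1 - lam) * (m%:R)^-1.
pose t (lam : R) := lam * ((n * m)%:R)^-1.
pose Ev (lam : R) (i : 'I_n) := (u lam * u lam + 2 * u lam * t lam) * \sum_(l < m) sig2 i
  + t lam * t lam * \sum_(k < n) \sum_(l < m) sig2 k
  + (u lam * \sum_(l < m) mu i + t lam * \sum_(k < n) \sum_(l < m) mu k
     - mu i) ^+ 2.
have Ei : forall lam i j, ('E_P[(fun w =>
    (baseline (fun i j => r i j : T -> R) lam i j w - mu i) ^+ 2)%R]
    = (Ev lam i)%:E)%E.
  move=> lam i j.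
  pose a := fun p : 'I_n * 'I_m => u lam * (p.1 == i)%:R + t lam.
  pose B := fun w => \sum_(p : 'I_n * 'I_m) a p * X p w.
  have hB : (fun w =>
      (baseline (fun i j => r i j : T -> R) lam i j w - mu i) ^+ 2)
      = (fun w => (B w - mu i) ^+ 2).
    apply/funext => w; rewrite /B lincomb /baseline /muhat /mubarhat /u /t /=.
    ring.
  have B2 : B \in Lfun P 2%:E by exact: L2_lin.
  have CB : Cv P B B = \sum_(p : 'I_n * 'I_m) a p * (a p * sig2 p.1).
    rewrite /B Cv_linl //; apply: eq_bigr => p0 _; rewrite Cv_linr //.
    congr (_ * _).
    rewrite (bigD1 p0) //= CX eqxx [X in _ + X]big1 ?addr0 //.
    by move=> q0 qp; rewrite CX eq_sym (negbTE qp) mulr0.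
  have CB2 : Cv P B B = (u lam * u lam + 2 * u lam * t lam) * \sum_(l < m) sig2 i
      + t lam * t lam * \sum_(k < n) \sum_(l < m) sig2 k.
    rewrite CB; transitivity (\sum_(p : 'I_n * 'I_m)
      ((u lam * u lam + 2 * u lam * t lam) * (p.1 == i)%:R + t lam * t lam)
        * sig2 p.1); last by rewrite lincomb.
    by apply: eq_bigr => p0 _; rewrite /a; case: (p0.1 == i) => /=; ring.
  have EB : Er P B = u lam * \sum_(l < m) mu i
      + t lam * \sum_(k < n) \sum_(l < m) mu k.
    rewrite /B Er_lin //.
    transitivity (\sum_(p : 'I_n * 'I_m) a p * mu p.1); last by rewrite lincomb.
    by apply: eq_bigr => p0 _; rewrite EX.
  by rewrite hB sq_dev // CB2 EB.
pose S := \sum_(k < n) sig2 k.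
pose M := \sum_(k < n) mu k.
pose Q := \sum_(i < n) (mu i - mubar mu) ^+ 2.
have mR : (m%:R : R) != 0 by rewrite pnatr_eq0 -lt0n.
have nR : (n%:R : R) != 0 by rewrite pnatr_eq0 -lt0n (leq_trans _ hn).
have cst_m : forall x : R, \sum_(l < m) x = m%:R * x.
  by move=> x; rewrite sumr_const card_ord mulr_natl.
have SS : \sum_(k < n) \sum_(l < m) sig2 k = m%:R * S.
  by rewrite /S mulr_sumr; apply: eq_bigr => k _; exact: cst_m.
have MM : \sum_(k < n) \sum_(l < m) mu k = m%:R * M.
  by rewrite /M mulr_sumr; apply: eq_bigr => k _; exact: cst_m.
have EvE : forall lam i, Ev lam i =
    (u lam * u lam + 2 * u lam * t lam) * (m%:R * sig2 i)
    + t lam * t lam * (m%:R * S) + lam ^+ 2 * (mu i - mubar mu) ^+ 2.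
  move=> lam i; rewrite /Ev cst_m cst_m SS MM; congr (_ + _).
  rewrite /u /t /mubar /M natrM; field.
  by rewrite mR nR.
pose F (lam : R) := ((m * n)%:R)^-1 * (m%:R *
   ((u lam * u lam + 2 * u lam * t lam) * (m%:R * S)
    + n%:R * (t lam * t lam * (m%:R * S)) + lam ^+ 2 * Q)).
have mseE : forall lam,
    baseline_mse P (fun i j => r i j : T -> R) mu lam = (F lam)%:E.
  move=> lam; rewrite /baseline_mse.
  under eq_bigr => i _ do under eq_bigr => j _ do rewrite Ei.
  under eq_bigr => i _ do rewrite sumEFin.
  rewrite sumEFin -EFinM /F; congr EFin; congr (_ * _).
  under eq_bigr => i _ do rewrite cst_m.
  rewrite -mulr_sumr; congr (_ * _).
  under eq_bigr => i _ do rewrite EvE.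
  rewrite !big_split /= -!mulr_sumr sumr_const card_ord.
  rewrite -[S *+ n]mulr_natl /S /Q; ring.
pose v := vbar m sig2.
pose s := sbar mu.
have nmR : ((n * m)%:R : R) != 0 by rewrite natrM mulf_neq0.
have SE : S = (n * m)%:R * v by rewrite /v /vbar mulrA mulfV ?mul1r.
have n2 : (2 : R) <= n%:R by rewrite ler_nat.
have n1 : ((n - 1)%:R : R) = n%:R - 1 by rewrite natrB // (leq_trans _ hn).
have n1R : (n%:R - 1 : R) != 0 by apply/eqP => h; move: n2; rewrite -subr_ge0; lra.
have QE : Q = (n%:R - 1) * s by rewrite /s /sbar n1 mulrA mulfV ?mul1r.
have v0 : 0 <= v.
  by rewrite /v /vbar mulr_ge0 ?invr_ge0 ?ler0n // sumr_ge0.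
have s0 : 0 <= s.
  by rewrite /s /sbar mulr_ge0 ?invr_ge0 ?ler0n // sumr_ge0 // => i _; exact: sqr_ge0.
have hpos' : 0 < s + v by [].
have svR : s + v != 0 by rewrite gt_eqF.
split.
  apply/andP; split; first by rewrite /lamstar divr_ge0 // ltW.
  by rewrite /lamstar ler_pdivrMr // mul1r -/v lerDr.
move=> lam _; rewrite !mseE lee_fin -subr_ge0.
have key : F lam - F lamstar = (n%:R - 1) / n%:R * (s + v) * (lam - lamstar) ^+ 2.
  rewrite /F SE QE /lamstar /u /t -/v -/s !natrM; field.
  by rewrite mR nR svR.
rewrite key; apply: mulr_ge0; last exact: sqr_ge0.
apply: mulr_ge0; last exact: ltW.
by apply: divr_ge0; [rewrite subr_ge0; lra | exact: ler0n].
Qed.
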